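(* Let $(M,\mathfrak m)$ be a $\mathfrak C$-cowreath with structure maps $\xi,\delta$. If $(X,\mathfrak x)$ is a right $(M,\mathfrak m)$-comodule with coaction $\varrho:\mathfrak C\otimes X\to\mathfrak C\otimes X\otimes M$, then $$\Big(\mathfrak C\otimes X,\ (\mathfrak C\otimes\mathfrak x\otimes M)\circ(\mathfrak C\otimes\varrho)\circ(\Delta\otimes X)\Big)$$ is an object of ${}_A\mathscr M^{\mathfrak C\otimes M}$ (with respect to the coring structure $\Delta'=(\mathfrak C\otimes\mathfrak m\otimes M)(\mathfrak C\otimes\delta)(\Delta\otimes M)$, $\varepsilon'=\varepsilon\circ\xi$ on $\mathfrak C\otimes M$), and every morphism $f:\mathfrak C\otimes X\to\mathfrak C\otimes X'$ of right $(M,\mathfrak m)$-comodules is a morphism in ${}_A\mathscr M^{\mathfrak C\otimes M}$ between the corresponding objects. This defines a faithful functor $\mathscr O$ from the category of right $(M,\mathfrak m)$-comodules to ${}_A\mathscr M^{\mathfrak C\otimes M}$, with $\mathscr O(f)=f$.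
   Context: Fix a commutative ring $\mathbb K$; rings are associative unital $\mathbb K$-algebras, bimodules unital and $\mathbb K$-central. $A$ is a ring, $\otimes=\otimes_A$, canonical unit isomorphisms are suppressed, identity maps are denoted by the objects. $(\mathfrak C,\Delta,\varepsilon)$ is an $A$-coring. For an $A$-coring $\mathfrak D$, ${}_A\mathscr M^{\mathfrak D}$ is the category of right $\mathfrak D$-comodules whose underlying module is an $A$-bimodule with $A$-bilinear coaction; morphisms are $A$-bilinear $\mathfrak D$-colinear maps. $\mathscr R_{(\mathfrak C:A)}$ has objects $(M,\mathfrak m)$, $M$ an $A$-bimodule, $\mathfrak m:\mathfrak C\otimes M\to M\otimes\mathfrak C$ $A$-bilinear with $(M\otimes\Delta)\mathfrak m=(\mathfrak m\otimes\mathfrak C)(\mathfrak C\otimes\mathfrak m)(\Delta\otimes M)$ and $(M\otimes\varepsilon)\mathfrak m=\varepsilon\otimes M$; $\mathfrak C\otimes M$ is a $\mathfrak C$-bicomodule with left coaction $\Delta\otimes M$ and right coaction $(\mathfrak C\otimes\mathfrak m)(\Delta\otimes M)$; morphisms are $\mathfrak C$-bicomodule maps $\mathfrak C\otimes M\to\mathfrak C\otimes M'$. A $\mathfrak C$-cowreath is an object $(M,\mathfrak m)$ with $\mathfrak C$-bicolinear $\xi:\mathfrak C\otimes M\to\mathfrak C$, $\delta:\mathfrak C\otimes M\to\mathfrak C\otimes M\otimes M$ such that $(\xi\otimes M)\delta=\mathfrak C\otimes M$, $(M\otimes\xi)(\mathfrak m\otimes M)\delta=\mathfrak m$, $(\mathfrak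 m\otimes M\otimes M)(\delta\otimes M)\delta=(M\otimes\delta)(\mathfrak m\otimes M)\delta$; then $(\mathfrak C\otimes M,\Delta',\varepsilon')$ is an $A$-coring. A right $(M,\mathfrak m)$-comodule is an object $(X,\mathfrak x)$ of $\mathscr R_{(\mathfrak C:A)}$ with a $\mathfrak C$-bicomodule map $\varrho:\mathfrak C\otimes X\to\mathfrak C\otimes X\otimes M$ (target with left coaction $\Delta\otimes X\otimes M$ and right coaction $(\mathfrak C\otimes X\otimes\mathfrak m)(\mathfrak C\otimes\mathfrak x\otimes M)(\Delta\otimes X\otimes M)$) such that $(X\otimes\xi)(\mathfrak x\otimes M)\varrho=\mathfrak x$ and $(X\otimes\delta)(\mathfrak x\otimes M)\varrho=(\mathfrak x\otimes M\otimes M)(\varrho\otimes M)\varrho$; a morphism of right comodules $(X,\mathfrak x)\to(X',\mathfrak x')$ is a $\mathfrak C$-bicomodule map $f:\mathfrak C\otimes X\to\mathfrak C\otimes X'$ with $\varrho'\circ f=(f\otimes M)\circ\varrho$. *)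

(* Defs.v *)
(* The category of K-central A-bimodules with ⊗_A is a (non-strict) monoidal
   category; all constructions of the statement (corings, comodules,
   cowreaths, ...) only use this monoidal structure.  We therefore formalize
   them in an arbitrary monoidal category, with all associativity and unit
   isomorphisms made explicit. *)

Set Implicit Arguments.

Record MonCat := MkMonCat {
  ob :> Type;
  hom : ob -> ob -> Type;
  comp : forall a b c : ob, hom b c -> hom a b -> hom a c;
  idm : forall a : ob, hom a a;
  tens : ob -> ob -> ob;
  tensm : forall a b c d : ob, hom a b -> hom c d -> hom (tens a c) (tens b d);
  unit_ob : ob;
  asc : forall a b c : ob, hom (tens (tens a b) c) (tens a (tens b c));
  asci : forall a b c : ob, hom (tens a (tens b c)) (tens (tens a b) c);
  lu : forall a : ob, hom (tens unit_ob a) a;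
  lui : forall a : ob, hom a (tens unit_ob a);
  ru : forall a : ob, hom (tens a unit_ob) a;
  rui : forall a : ob, hom a (tens a unit_ob);
  comp_assoc : forall a b c d (f : hom c d) (g : hom b c) (h : hom a b),
    comp f (comp g h) = comp (comp f g) h;
  comp_idl : forall a b (f : hom a b), comp (idm b) f = f;
  comp_idr : forall a b (f : hom a b), comp f (idm a) = f;
  tensm_id : forall a b, tensm (idm a) (idm b) = idm (tens a b);
  tensm_comp : forall a1 b1 c1 a2 b2 c2 (f1 : hom b1 c1) (g1 : hom a1 b1)
      (f2 : hom b2 c2) (g2 : hom a2 b2),
    tensm (comp f1 g1) (comp f2 g2) = comp (tensm f1 f2) (tensm g1 g2);
  asc_asci : forall a b c, comp (asc a b c) (asci a b c) = idm _;
  asci_asc : forall a b c, comp (asci a b c) (asc a b c) = idm _;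
  asc_nat : forall a a' b b' c c' (f : hom a a') (g : hom b b') (h : hom c c'),
    comp (asc a' b' c') (tensm (tensm f g) h) = comp (tensm f (tensm g h)) (asc a b c);
  lu_lui : forall a, comp (lu a) (lui a) = idm a;
  lui_lu : forall a, comp (lui a) (lu a) = idm _;
  lu_nat : forall a b (f : hom a b), comp (lu b) (tensm (idm unit_ob) f) = comp f (lu a);
  ru_rui : forall a, comp (ru a) (rui a) = idm a;
  rui_ru : forall a, comp (rui a) (ru a) = idm _;
  ru_nat : forall a b (f : hom a b), comp (ru b) (tensm f (idm unit_ob)) = comp f (ru a);
  pentagon : forall a b c d,
    comp (asc a b (tens c d)) (asc (tens a b) c d)
    = comp (tensm (idm a) (asc b c d)) (comp (asc a (tens b c) d) (tensm (asc a b c) (idm d)));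
  triangle : forall a b,
    comp (tensm (idm a) (lu b)) (asc a unit_ob b) = tensm (ru a) (idm b)
}.

Arguments hom {m}.
Arguments comp {m a b c}.
Arguments idm {m}.
Arguments tens {m}.
Arguments tensm {m a b c d}.
Arguments unit_ob {m}.
Arguments asc {m}.
Arguments asci {m}.
Arguments lu {m}.
Arguments ru {m}.

Declare Scope moncat_scope.
Local Open Scope moncat_scope.
Local Notation "g ∘ f" := (comp g f) (at level 40, left associativity) : moncat_scope.
Local Notation "a ⊗ b" := (tens a b) (at level 35, right associativity) : moncat_scope.
Local Notation "f ⊗' g" := (tensm f g) (at level 35, right associativity) : moncat_scope.

Section Defs.
Context {V : MonCat}.

(* Right D-comodules (objects of _A M^D): coassociativity and counitality *)
Definition is_rcomod {D : V} (ΔD : hom D (D ⊗ D)) (εD : hom D unit_ob)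
    {N : V} (r : hom N (N ⊗ D)) : Prop :=
  asc N D D ∘ (r ⊗' idm D) ∘ r = (idm N ⊗' ΔD) ∘ r /\
  ru N ∘ (idm N ⊗' εD) ∘ r = idm N.

Definition is_rcomod_map {D : V} {N N' : V} (r : hom N (N ⊗ D)) (r' : hom N' (N' ⊗ D))
    (f : hom N N') : Prop :=
  r' ∘ f = (f ⊗' idm D) ∘ r.

Context {C : V} (Δ : hom C (C ⊗ C)) (ε : hom C unit_ob).

Definition is_coring : Prop :=
  asc C C C ∘ (Δ ⊗' idm C) ∘ Δ = (idm C ⊗' Δ) ∘ Δ /\
  lu C ∘ (ε ⊗' idm C) ∘ Δ = idm C /\
  ru C ∘ (idm C ⊗' ε) ∘ Δ = idm C.

Definition bicolin {N N' : V} (l : hom N (C ⊗ N)) (r : hom N (N ⊗ C))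
    (l' : hom N' (C ⊗ N')) (r' : hom N' (N' ⊗ C)) (f : hom N N') : Prop :=
  l' ∘ f = (idm C ⊗' f) ∘ l /\ r' ∘ f = (f ⊗' idm C) ∘ r.

Definition lcoact (Y : V) : hom (C ⊗ Y) (C ⊗ (C ⊗ Y)) :=
  asc C C Y ∘ (Δ ⊗' idm Y).

Definition rcoact {Y : V} (y : hom (C ⊗ Y) (Y ⊗ C)) : hom (C ⊗ Y) ((C ⊗ Y) ⊗ C) :=
  asci C Y C ∘ (idm C ⊗' y) ∘ asc C C Y ∘ (Δ ⊗' idm Y).

Definition isR (M : V) (m : hom (C ⊗ M) (M ⊗ C)) : Prop :=
  (idm M ⊗' Δ) ∘ m
    = asc M C C ∘ (m ⊗' idm C) ∘ asci C M C ∘ (idm C ⊗' m) ∘ asc C C M ∘ (Δ ⊗' idm M) /\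
  ru M ∘ (idm M ⊗' ε) ∘ m = lu M ∘ (ε ⊗' idm M).

Definition isR_map {X X' : V} (x : hom (C ⊗ X) (X ⊗ C)) (x' : hom (C ⊗ X') (X' ⊗ C))
    (f : hom (C ⊗ X) (C ⊗ X')) : Prop :=
  bicolin (lcoact X) (rcoact x) (lcoact X') (rcoact x') f.

Definition tensdl {X M : V} (x : hom (C ⊗ X) (X ⊗ C)) (m : hom (C ⊗ M) (M ⊗ C)) :
    hom (C ⊗ (X ⊗ M)) ((X ⊗ M) ⊗ C) :=
  asci X M C ∘ (idm X ⊗' m) ∘ asc X C M ∘ (x ⊗' idm M) ∘ asci C X M.

Context {M : V} (m : hom (C ⊗ M) (M ⊗ C))
        (ξ : hom (C ⊗ M) C) (δ : hom (C ⊗ M) (C ⊗ (M ⊗ M))).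

Definition is_cowreath : Prop :=
  isR M m /\
  bicolin (lcoact M) (rcoact m) Δ Δ ξ /\
  bicolin (lcoact M) (rcoact m) (lcoact (M ⊗ M)) (rcoact (tensdl m m)) δ /\
  (ξ ⊗' idm M) ∘ asci C M M ∘ δ = idm (C ⊗ M) /\
  (idm M ⊗' ξ) ∘ asc M C M ∘ (m ⊗' idm M) ∘ asci C M M ∘ δ = m /\
  asc M C (M ⊗ M) ∘ (m ⊗' idm (M ⊗ M)) ∘ asc (C ⊗ M) M M ∘ (asci C M M ⊗' idm M)
      ∘ (δ ⊗' idm M) ∘ asci C M M ∘ δ
    = (idm M ⊗' δ) ∘ asc M C M ∘ (m ⊗' idm M) ∘ asci C M M ∘ δ.

Definition Dprime : hom (C ⊗ M) ((C ⊗ M) ⊗ (C ⊗ M)) :=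
  asci C M (C ⊗ M) ∘ (idm C ⊗' asc M C M) ∘ (idm C ⊗' (m ⊗' idm M))
    ∘ (idm C ⊗' asci C M M) ∘ (idm C ⊗' δ) ∘ asc C C M ∘ (Δ ⊗' idm M).

Definition eprime : hom (C ⊗ M) unit_ob := ε ∘ ξ.

Definition is_rMcomod {X : V} (x : hom (C ⊗ X) (X ⊗ C)) (ρ : hom (C ⊗ X) (C ⊗ (X ⊗ M))) : Prop :=
  isR X x /\
  bicolin (lcoact X) (rcoact x) (lcoact (X ⊗ M)) (rcoact (tensdl x m)) ρ /\
  (idm X ⊗' ξ) ∘ asc X C M ∘ (x ⊗' idm M) ∘ asci C X M ∘ ρ = x /\
  (idm X ⊗' δ) ∘ asc X C M ∘ (x ⊗' idm M) ∘ asci C X M ∘ ρ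
    = asc X C (M ⊗ M) ∘ (x ⊗' idm (M ⊗ M)) ∘ asc (C ⊗ X) M M ∘ (asci C X M ⊗' idm M)
        ∘ (ρ ⊗' idm M) ∘ asci C X M ∘ ρ.

Definition is_rMcomod_map {X X' : V} (x : hom (C ⊗ X) (X ⊗ C)) (x' : hom (C ⊗ X') (X' ⊗ C))
    (ρ : hom (C ⊗ X) (C ⊗ (X ⊗ M))) (ρ' : hom (C ⊗ X') (C ⊗ (X' ⊗ M)))
    (f : hom (C ⊗ X) (C ⊗ X')) : Prop :=
  isR_map x x' f /\
  ρ' ∘ f = asc C X' M ∘ (f ⊗' idm M) ∘ asci C X M ∘ ρ.

Definition Ocoact {X : V} (x : hom (C ⊗ X) (X ⊗ C)) (ρ : hom (C ⊗ X) (C ⊗ (X ⊗ M))) :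
    hom (C ⊗ X) ((C ⊗ X) ⊗ (C ⊗ M)) :=
  asci C X (C ⊗ M) ∘ (idm C ⊗' asc X C M) ∘ (idm C ⊗' (x ⊗' idm M))
    ∘ (idm C ⊗' asci C X M) ∘ (idm C ⊗' ρ) ∘ asc C C X ∘ (Δ ⊗' idm X).

End Defs.

(* Main.v *)
Require Import Defs.
Local Notation "g ∘ f" := (comp g f) (at level 40, left associativity).
Local Notation "f ⊗' g" := (tensm f g) (at level 35, right associativity).


Section S.
Context {V : MonCat}.

Lemma pre2 {b c d e : V} {p1 : hom c d} {p2 : hom b c} {r : hom b d} :
  p1 ∘ p2 = r -> forall (q : hom d e), q ∘ p1 ∘ p2 = q ∘ r.
Proof. intros H q. rewrite <- H, !comp_assoc. reflexivity. Qed.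
Lemma pre3 {b c d e f : V} {p1 : hom d e} {p2 : hom c d} {p3 : hom b c} {r : hom b e} :
  p1 ∘ p2 ∘ p3 = r -> forall (q : hom e f), q ∘ p1 ∘ p2 ∘ p3 = q ∘ r.
Proof. intros H q. rewrite <- H, !comp_assoc. reflexivity. Qed.
Lemma pre4 {b c d e f g : V} {p1 : hom e f} {p2 : hom d e} {p3 : hom c d} {p4 : hom b c} {r : hom b f} :
  p1 ∘ p2 ∘ p3 ∘ p4 = r -> forall (q : hom f g), q ∘ p1 ∘ p2 ∘ p3 ∘ p4 = q ∘ r.
Proof. intros H q. rewrite <- H, !comp_assoc. reflexivity. Qed.
Lemma pre5 {b c d e f g h : V} {p1 : hom f g} {p2 : hom e f} {p3 : hom d e} {p4 : hom c d} {p5 : hom b c} {r : hom b g} :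
  p1 ∘ p2 ∘ p3 ∘ p4 ∘ p5 = r -> forall (q : hom g h), q ∘ p1 ∘ p2 ∘ p3 ∘ p4 ∘ p5 = q ∘ r.
Proof. intros H q. rewrite <- H, !comp_assoc. reflexivity. Qed.
Lemma pre6 {b c d e f g h i : V} {p1 : hom g h} {p2 : hom f g} {p3 : hom e f} {p4 : hom d e} {p5 : hom c d} {p6 : hom b c} {r : hom b h} :
  p1 ∘ p2 ∘ p3 ∘ p4 ∘ p5 ∘ p6 = r -> forall (q : hom h i), q ∘ p1 ∘ p2 ∘ p3 ∘ p4 ∘ p5 ∘ p6 = q ∘ r.
Proof. intros H q. rewrite <- H, !comp_assoc. reflexivity. Qed.
Lemma pre7 {b c d e f g h i j : V} {p1 : hom h i} {p2 : hom g h} {p3 : hom f g} {p4 : hom e f} {p5 : hom d e} {p6 : hom c d} {p7 : hom b c} {r : hom b i} :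
  p1 ∘ p2 ∘ p3 ∘ p4 ∘ p5 ∘ p6 ∘ p7 = r -> forall (q : hom i j), q ∘ p1 ∘ p2 ∘ p3 ∘ p4 ∘ p5 ∘ p6 ∘ p7 = q ∘ r.
Proof. intros H q. rewrite <- H, !comp_assoc. reflexivity. Qed.
End S.

Ltac lassoc := repeat (rewrite comp_assoc || rewrite comp_idl || rewrite comp_idr || rewrite tensm_id).
Ltac rw0 H := first [ rewrite (pre2 H) | rewrite (pre3 H) | rewrite (pre4 H) | rewrite (pre5 H)
   | rewrite (pre6 H) | rewrite (pre7 H) | rewrite H ]; lassoc.
Tactic Notation "rw" open_constr(H) := rw0 H.
Tactic Notation "rwl" open_constr(H) := rw0 (eq_sym H).
Section T.
Context {V : MonCat}.

Lemma tcl (a b c d : V) (f : hom b c) (g : hom a b) :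
  (f ⊗' idm d) ∘ (g ⊗' idm d) = (f ∘ g) ⊗' idm d.
Proof. rewrite <- tensm_comp, comp_idl. reflexivity. Qed.
Lemma tcr (a b c d : V) (f : hom b c) (g : hom a b) :
  (idm d ⊗' f) ∘ (idm d ⊗' g) = idm d ⊗' (f ∘ g).
Proof. rewrite <- tensm_comp, comp_idl. reflexivity. Qed.
Lemma xchl (a a' b b' : V) (f : hom a a') (g : hom b b') :
  (f ⊗' idm b') ∘ (idm a ⊗' g) = f ⊗' g.
Proof. rewrite <- tensm_comp, comp_idl, comp_idr. reflexivity. Qed.
Lemma xchr (a a' b b' : V) (f : hom a a') (g : hom b b') :
  (idm a' ⊗' g) ∘ (f ⊗' idm b) = f ⊗' g.
Proof. rewrite <- tensm_comp, comp_idl, comp_idr. reflexivity. Qed.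
Lemma anat (a a' b b' c c' : V) (f : hom a a') (g : hom b b') (h : hom c c') :
  asc a' b' c' ∘ ((f ⊗' g) ⊗' h) = (f ⊗' (g ⊗' h)) ∘ asc a b c.
Proof. apply asc_nat. Qed.
Lemma ainat (a a' b b' c c' : V) (f : hom a a') (g : hom b b') (h : hom c c') :
  asci a' b' c' ∘ (f ⊗' (g ⊗' h)) = ((f ⊗' g) ⊗' h) ∘ asci a b c.
Proof.
  rewrite <- (comp_idr V _ _ (asci a' b' c' ∘ _)).
  rewrite <- (asc_asci V a b c). lassoc. rwl (asc_nat V _ _ _ _ _ _ _ _ _). rw (asci_asc V _ _ _). reflexivity.
Qed.
Lemma pent (a b c d : V) :
  asc a b (tens c d) ∘ asc (tens a b) c d
  = (idm a ⊗' asc b c d) ∘ asc a (tens b c) d ∘ (asc a b c ⊗' idm d).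
Proof. rewrite pentagon. lassoc. reflexivity. Qed.
Lemma pentA (a b c d : V) :
  asc (tens a b) c d ∘ (asci a b c ⊗' idm d)
  = asci a b (tens c d) ∘ (idm a ⊗' asc b c d) ∘ asc a (tens b c) d.
Proof.
  rewrite <- (comp_idl V _ _ (asc (tens a b) c d ∘ _)).
  rewrite <- (asci_asc V a b (tens c d)). lassoc. rw (pent _ _ _ _). rw (tcl _ _ _ _ _ _). rw (asc_asci V _ _ _).
  reflexivity.
Qed.
Lemma pentB (a b c d : V) :
  asci a b (tens c d) ∘ (idm a ⊗' asc b c d) ∘ asc a (tens b c) d
  = asc (tens a b) c d ∘ (asci a b c ⊗' idm d).
Proof. symmetry. apply pentA. Qed.
End T.

Ltac splitt := repeat (rwl (tcl _ _ _ _ _ _) || rwl (tcr _ _ _ _ _ _)).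

Section U.
Context {V : MonCat}.

Lemma LCOT (C Y Z : V) (Δ : hom C (tens C C)) :
  asc C C (tens Y Z) ∘ (Δ ⊗' idm (tens Y Z))
  = (idm C ⊗' asc C Y Z) ∘ asc C (tens C Y) Z ∘ (asc C C Y ⊗' idm Z) ∘ ((Δ ⊗' idm Y) ⊗' idm Z) ∘ asci C Y Z.
Proof.
  rwl (pent _ _ _ _). rw (anat _ _ _ _ _ _ _ _ _). rw (asc_asci V _ _ _). reflexivity.
Qed.

Lemma OCF (C X M : V) (Δ : hom C (tens C C)) (x : hom (tens C X) (tens X C))
  (ρ : hom (tens C X) (tens C (tens X M))) :
  asc C C (tens X M) ∘ (Δ ⊗' idm (tens X M)) ∘ ρ = (idm C ⊗' ρ) ∘ asc C C X ∘ (Δ ⊗' idm X) ->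
  Ocoact Δ x ρ = asc (tens C X) C M ∘ (rcoact Δ x ⊗' idm M) ∘ asci C X M ∘ ρ.
Proof.
  intro Hl. unfold Ocoact, rcoact. rwl Hl. rw (LCOT _ _ _ _).
  rw (tcr _ _ _ _ (asci C X M) (asc C X M)). rw (asci_asc V _ _ _).
  rwl (anat _ _ _ _ _ _ (idm C) x (idm M)). rw (pentB _ _ _ _).
  splitt. reflexivity.
Qed.
End U.

Section W.
Context {V : MonCat}.

Lemma faithR (a b : V) (f g : hom a b) : f ⊗' idm unit_ob = g ⊗' idm unit_ob -> f = g.
Proof.
  intro H. rewrite <- (comp_idr V _ _ f), <- (comp_idr V _ _ g), <- (ru_rui V a).
  rewrite !comp_assoc, <- !ru_nat, H. reflexivity.
Qed.

Lemma RUA (a b : V) : ru (tens a b) ∘ asci a b unit_ob = idm a ⊗' ru b.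
Proof.
  assert (K : asc a b unit_ob ∘ (ru (tens a b) ⊗' idm unit_ob)
             = asc a b unit_ob ∘ (((idm a ⊗' ru b) ∘ asc a b unit_ob) ⊗' idm unit_ob)).
  { rewrite <- (triangle V (tens a b) unit_ob). rewrite <- (tensm_id V a b).
    rewrite comp_assoc, anat. rewrite <- comp_assoc, pent. lassoc.
    rw (tcr _ _ _ _ (idm b ⊗' lu unit_ob) (asc b unit_ob unit_ob)). rw (triangle V _ _).
    rwl (anat _ _ _ _ _ _ (idm a) (ru b) (idm unit_ob)). splitt. reflexivity. }
  assert (H : ru (tens a b) = (idm a ⊗' ru b) ∘ asc a b unit_ob).
  { apply faithR. rewrite <- (comp_idl V _ _ (ru (tens a b) ⊗' idm unit_ob)).
    rewrite <- (asci_asc V a b unit_ob), <- comp_assoc, K. lassoc. rw (asci_asc V _ _ _). reflexivity. }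
  rewrite H, <- comp_assoc, asc_asci, comp_idr. reflexivity.
Qed.

Lemma ainat1 (a b c c' : V) (h : hom c c') :
  asci a b c' ∘ (idm a ⊗' (idm b ⊗' h)) = (idm (tens a b) ⊗' h) ∘ asci a b c.
Proof. rewrite ainat, tensm_id. reflexivity. Qed.

Lemma MORPH (C X X' M : V) (Δ : hom C (tens C C)) (x : hom (tens C X) (tens X C))
  (x' : hom (tens C X') (tens X' C))
  (ρ : hom (tens C X) (tens C (tens X M))) (ρ' : hom (tens C X') (tens C (tens X' M)))
  (f : hom (tens C X) (tens C X')) :
  asc C C (tens X M) ∘ (Δ ⊗' idm (tens X M)) ∘ ρ = (idm C ⊗' ρ) ∘ asc C C X ∘ (Δ ⊗' idm X) ->
  asc C C (tens X' M) ∘ (Δ ⊗' idm (tens X' M)) ∘ ρ' = (idm C ⊗' ρ') ∘ asc C C X' ∘ (Δ ⊗' idm X') ->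
  rcoact Δ x' ∘ f = (f ⊗' idm C) ∘ rcoact Δ x ->
  ρ' ∘ f = asc C X' M ∘ (f ⊗' idm M) ∘ asci C X M ∘ ρ ->
  Ocoact Δ x' ρ' ∘ f = (f ⊗' idm (tens C M)) ∘ Ocoact Δ x ρ.
Proof.
  intros Hl Hl' Hr Hf. rewrite (OCF _ _ _ _ x _ Hl), (OCF _ _ _ _ x' _ Hl'). lassoc.
  rw Hf. rw (asci_asc V _ _ _). rw (tcl _ _ _ _ (rcoact Δ x') f). rw Hr. splitt.
  rw (anat _ _ _ _ _ _ _ _ _). reflexivity.
Qed.
End W.

Section X1.
Context {V : MonCat}.
Lemma COUNIT (C X M : V) (Δ : hom C (tens C C)) (ε : hom C unit_ob) (x : hom (tens C X) (tens X C))
  (ρ : hom (tens C X) (tens C (tens X M))) (ξ : hom (tens C M) C) :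
  ru C ∘ (idm C ⊗' ε) ∘ Δ = idm C ->
  ru X ∘ (idm X ⊗' ε) ∘ x = lu X ∘ (ε ⊗' idm X) ->
  (idm X ⊗' ξ) ∘ asc X C M ∘ (x ⊗' idm M) ∘ asci C X M ∘ ρ = x ->
  ru (tens C X) ∘ (idm (tens C X) ⊗' eprime ε ξ) ∘ Ocoact Δ x ρ = idm (tens C X).
Proof.
  intros Hc HR Hxi. unfold eprime, Ocoact. splitt.
  rwl (ainat1 _ _ _ _ ξ).
  do 4 rw (tcr _ _ _ _ _ _). rewrite Hxi.
  rwl (ainat1 _ _ _ _ ε). rw (RUA _ _).
  do 2 rw (tcr _ _ _ _ _ _). rewrite HR. splitt.
  rwl (anat _ _ _ _ _ _ (idm C) ε (idm X)). rw (triangle V _ _).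
  do 2 rw (tcl _ _ _ _ _ _). rewrite Hc. lassoc. reflexivity.
Qed.
End X1.

Section Y.
Context {V : MonCat}.
Lemma anatL (a a' b c : V) (f : hom a a') :
  (f ⊗' idm (tens b c)) ∘ asc a b c = asc a' b c ∘ ((f ⊗' idm b) ⊗' idm c).
Proof. rewrite anat, tensm_id. reflexivity. Qed.
Lemma anatR (a b c c' : V) (h : hom c c') :
  asc a b c' ∘ (idm (tens a b) ⊗' h) = (idm a ⊗' (idm b ⊗' h)) ∘ asc a b c.
Proof. rewrite <- (tensm_id V a b), anat. reflexivity. Qed.
Lemma swap (a a' b b' : V) (f : hom a a') (g : hom b b') :
  (f ⊗' idm b') ∘ (idm a ⊗' g) = (idm a' ⊗' g) ∘ (f ⊗' idm b).
Proof. rewrite xchl, xchr. reflexivity. Qed.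
Lemma pentE (a b c d : V) :
  asc a (tens b c) d ∘ (asc a b c ⊗' idm d) ∘ asci (tens a b) c d
  = (idm a ⊗' asci b c d) ∘ asc a b (tens c d).
Proof.
  rewrite <- (comp_idl V _ _ (asc a (tens b c) d ∘ _ ∘ _)).
  rewrite <- (tensm_id V a (tens (tens b c) d)), <- (asci_asc V b c d), <- tcr.
  lassoc. rwl (pent _ _ _ _). rw (asc_asci V _ _ _). reflexivity.
Qed.
Lemma ipent (a b c d : V) :
  asci (tens a b) c d ∘ asci a b (tens c d)
  = (asci a b c ⊗' idm d) ∘ asci a (tens b c) d ∘ (idm a ⊗' asci b c d).
Proof.
  assert (E : (asci a b c ⊗' idm d) ∘ asci a (tens b c) d ∘ (idm a ⊗' asci b c d)
     ∘ (idm a ⊗' asc b c d) ∘ asc a (tens b c) d ∘ (asc a b c ⊗' idm d) = idm _).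
  { rw (tcr _ _ _ _ (asci b c d) (asc b c d)). rw (asci_asc V _ _ _). rw (asci_asc V _ _ _).
    rw (tcl _ _ _ _ _ _). rw (asci_asc V _ _ _). reflexivity. }
  rewrite <- (comp_idl V _ _ (asci (tens a b) c d ∘ _)), <- E. lassoc.
  rwl (pent _ _ _ _). rw (asc_asci V _ _ _). rw (asc_asci V _ _ _). reflexivity.
Qed.
Lemma pentC (a b c d : V) :
  (asc a b c ⊗' idm d) ∘ asci (tens a b) c d ∘ asci a b (tens c d)
  = asci a (tens b c) d ∘ (idm a ⊗' asci b c d).
Proof. rw (ipent _ _ _ _). rw (tcl _ _ _ _ _ _). rw (asc_asci V _ _ _). reflexivity. Qed.

Lemma LCO (C X : V) (Δ : hom C (tens C C)) :
  asc C C C ∘ (Δ ⊗' idm C) ∘ Δ = (idm C ⊗' Δ) ∘ Δ ->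
  (Δ ⊗' idm (tens C X)) ∘ asc C C X ∘ (Δ ⊗' idm X)
  = asci C C (tens C X) ∘ (idm C ⊗' asc C C X) ∘ (idm C ⊗' (Δ ⊗' idm X)) ∘ asc C C X ∘ (Δ ⊗' idm X).
Proof.
  intro Hco.
  assert (H' : (Δ ⊗' idm C) ∘ Δ = asci C C C ∘ (idm C ⊗' Δ) ∘ Δ).
  { rwl Hco. rw (asci_asc V _ _ _). reflexivity. }
  rw (anatL _ _ _ _ Δ). rw (tcl _ _ _ _ _ _). rewrite H'. splitt.
  rw (pentA _ _ _ _). rw (anat _ _ _ _ _ _ _ _ _). reflexivity.
Qed.

Lemma LHSred (C X D : V) (Δ : hom C (tens C C)) (A : hom (tens C X) (tens X D)) :
  asc C C C ∘ (Δ ⊗' idm C) ∘ Δ = (idm C ⊗' Δ) ∘ Δ ->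
  asc (tens C X) D D ∘ ((asci C X D ∘ (idm C ⊗' A) ∘ asc C C X ∘ (Δ ⊗' idm X)) ⊗' idm D)
    ∘ asci C X D ∘ (idm C ⊗' A) ∘ asc C C X ∘ (Δ ⊗' idm X)
  = asci C X (tens D D) ∘ (idm C ⊗' (asc X D D ∘ (A ⊗' idm D) ∘ asci C X D ∘ (idm C ⊗' A)
       ∘ asc C C X ∘ (Δ ⊗' idm X))) ∘ asc C C X ∘ (Δ ⊗' idm X).
Proof.
  intro Hco. splitt.
  rwl (ainat _ _ _ _ _ _ Δ (idm X) (idm D)).
  rw (swap _ _ _ _ Δ A). rw (LCO _ X _ Hco).
  rwl (ainat1 _ _ _ _ A). rw (pentC _ _ _ _).
  rwl (ainat _ _ _ _ _ _ (idm C) A (idm D)).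
  rw (pentA _ _ _ _). rw (asc_asci V _ _ _).
  repeat rw (tcr _ _ _ _ _ _). reflexivity.
Qed.
End Y.
Section K.
Context {V : MonCat}.
Lemma KEY (C X M : V) (Δ : hom C (tens C C)) (m : hom (tens C M) (tens M C))
  (δ : hom (tens C M) (tens C (tens M M))) (x : hom (tens C X) (tens X C))
  (r : hom (tens C X) (tens (tens C X) M)) (R : hom (tens C X) (tens (tens C X) C))
  (L : hom (tens C X) (tens C (tens C X))) :
  (idm X ⊗' Δ) ∘ x = asc X C C ∘ (x ⊗' idm C) ∘ R ->
  (r ⊗' idm C) ∘ R = asci (tens C X) M C ∘ (idm (tens C X) ⊗' m) ∘ asc (tens C X) C M ∘ (R ⊗' idm M) ∘ r ->
  (idm X ⊗' δ) ∘ asc X C M ∘ (x ⊗' idm M) ∘ r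
    = asc X C (tens M M) ∘ (x ⊗' idm (tens M M)) ∘ asc (tens C X) M M ∘ (r ⊗' idm M) ∘ r ->
  (L ⊗' idm M) ∘ r = asci C (tens C X) M ∘ (idm C ⊗' r) ∘ L ->
  asc (tens C X) C M ∘ (R ⊗' idm M) ∘ r
    = asci C X (tens C M) ∘ (idm C ⊗' asc X C M) ∘ (idm C ⊗' (x ⊗' idm M)) ∘ (idm C ⊗' r) ∘ L ->
  R = asci C X C ∘ (idm C ⊗' x) ∘ L ->
  asc X (tens C M) (tens C M) ∘ ((asc X C M ∘ (x ⊗' idm M) ∘ r) ⊗' idm (tens C M))
    ∘ asc (tens C X) C M ∘ (R ⊗' idm M) ∘ r
  = (idm X ⊗' Dprime Δ m δ) ∘ asc X C M ∘ (x ⊗' idm M) ∘ r.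
Proof.
  intros H1 H2 H3 H4 H5 HR.
  rewrite <- (tcl _ _ _ _ (asc X C M ∘ (x ⊗' idm M)) r). rwl (tcl _ _ _ _ (asc X C M) (x ⊗' idm M)).
  rw (anatL _ _ _ _ r). rw (tcl _ _ _ _ (r ⊗' idm C) R). rewrite H2. splitt.
  rewrite HR. splitt.
  rw (anatL _ _ _ _ (x ⊗' idm M)).
  rw (tcl _ _ _ _ ((x ⊗' idm M) ⊗' idm C) (asci (tens C X) M C)).
  rwl (ainat _ _ _ _ _ _ x (idm M) (idm C)). splitt.
  rw (tcl _ _ _ _ (x ⊗' idm (tens M C)) (idm (tens C X) ⊗' m)). rw (swap _ _ _ _ x m). splitt.
  rw (tcl _ _ _ _ (x ⊗' idm (tens C M)) (asc (tens C X) C M)). rw (anatL _ _ _ _ x). splitt.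
  assert (H4' : (idm C ⊗' r) ∘ L = asc C (tens C X) M ∘ (L ⊗' idm M) ∘ r).
  { rw H4. rw (asc_asci V _ _ _). reflexivity. }
  unfold Dprime. splitt.
  rwl (anat _ _ _ _ _ _ (idm X) Δ (idm M)).
  rw (tcl _ _ _ _ (idm X ⊗' Δ) x). rewrite H1. splitt.
  rwl (pent _ _ _ _).
  rwl (anatR _ _ _ _ δ).
  rwl (anatL _ _ _ _ x). rwl (swap _ _ _ _ x δ).
  rw H5. rwl (ainat1 _ _ _ _ δ).
  do 3 rw (tcr _ _ _ _ _ _). rewrite H3. splitt.
  rw H4'. rwl (anat _ _ _ _ _ _ (idm C) r (idm M)).
  rw (tcl _ _ _ _ (idm C ⊗' r) L). rewrite H4'. splitt.
  rwl (pent _ _ _ _). rwl (anat _ _ _ _ _ _ (idm C) x (idm (tens M M))).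
  rw (anatL _ _ _ _ (idm C ⊗' x)).
  rw (pentB _ _ _ _). rw (anatL _ _ _ _ (asci C X C)).
  rw (anatL _ _ _ _ x). rw (anatL _ _ _ _ (x ⊗' idm C)).
  rwl (anatR _ _ _ _ (asci C M M)). rw (pent _ _ _ _).
  rw (tcr _ _ _ _ (asci C M M) (asc C M M)). rw (asci_asc V _ _ _).
  rwl (anatR _ _ _ _ (m ⊗' idm M)). rwl (anat _ _ _ _ _ _ (idm (tens X C)) m (idm M)).
  rw (pentA _ _ _ _). rw (pentE _ _ _ _). rw (anatR _ _ _ _ (asc M C M)).
  reflexivity.
Qed.

Lemma OcA (C X M : V) (Δ : hom C (tens C C)) (x : hom (tens C X) (tens X C))
  (ρ : hom (tens C X) (tens C (tens X M))) :
  Ocoact Δ x ρ = asci C X (tens C M) ∘ (idm C ⊗' (asc X C M ∘ (x ⊗' idm M) ∘ asci C X M ∘ ρ))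
     ∘ asc C C X ∘ (Δ ⊗' idm X).
Proof. unfold Ocoact. splitt. reflexivity. Qed.

Lemma ASSEM (C X D : V) (Δ : hom C (tens C C)) (A : hom (tens C X) (tens X D)) (Dp : hom D (tens D D)) :
  asc C C C ∘ (Δ ⊗' idm C) ∘ Δ = (idm C ⊗' Δ) ∘ Δ ->
  asc X D D ∘ (A ⊗' idm D) ∘ (asci C X D ∘ (idm C ⊗' A) ∘ asc C C X ∘ (Δ ⊗' idm X)) = (idm X ⊗' Dp) ∘ A ->
  asc (tens C X) D D ∘ ((asci C X D ∘ (idm C ⊗' A) ∘ asc C C X ∘ (Δ ⊗' idm X)) ⊗' idm D)
    ∘ (asci C X D ∘ (idm C ⊗' A) ∘ asc C C X ∘ (Δ ⊗' idm X))
  = (idm (tens C X) ⊗' Dp) ∘ (asci C X D ∘ (idm C ⊗' A) ∘ asc C C X ∘ (Δ ⊗' idm X)).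
Proof.
  intros Hco K. lassoc. rewrite !comp_assoc in K.
  rw (LHSred _ _ _ _ A Hco). rewrite K.
  rwl (ainat1 _ _ _ _ Dp). rw (tcr _ _ _ _ (idm X ⊗' Dp) A). reflexivity.
Qed.
End K.

Theorem mainTheorem10 (V : MonCat) (C : V) (Δ : hom C (tens C C)) (ε : hom C unit_ob)
    (M : V) (m : hom (tens C M) (tens M C))
    (ξ : hom (tens C M) C) (δ : hom (tens C M) (tens C (tens M M))) :
  is_coring Δ ε ->
  is_cowreath Δ ε m ξ δ ->
  (forall (X : V) (x : hom (tens C X) (tens X C)) (ρ : hom (tens C X) (tens C (tens X M))),
     is_rMcomod Δ ε m ξ δ x ρ ->
     is_rcomod (Dprime Δ m δ) (eprime ε ξ) (Ocoact Δ x ρ)) /\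
  (forall (X X' : V) (x : hom (tens C X) (tens X C)) (x' : hom (tens C X') (tens X' C))
          (ρ : hom (tens C X) (tens C (tens X M))) (ρ' : hom (tens C X') (tens C (tens X' M)))
          (f : hom (tens C X) (tens C X')),
     is_rMcomod Δ ε m ξ δ x ρ ->
     is_rMcomod Δ ε m ξ δ x' ρ' ->
     is_rMcomod_map Δ x x' ρ ρ' f ->
     is_rcomod_map (Ocoact Δ x ρ) (Ocoact Δ x' ρ') f).
Proof.
  intros [Hco [Hlc Hrc]] _. split.
  - intros X x ρ [[HR1 HR2] [[Hl Hr] [Hxi Hde]]].
    unfold lcoact in Hl. rewrite !comp_assoc in Hl.
    split.
    + rewrite (OcA C X M Δ x ρ).
      apply ASSEM; [exact Hco|].
      rewrite <- (OcA C X M Δ x ρ). rewrite (OCF C X M Δ x ρ Hl).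
      pose proof (KEY C X M Δ m δ x (asci C X M ∘ ρ) (rcoact Δ x) (asc C C X ∘ (Δ ⊗' idm X))) as K.
      unfold rcoact in *. lassoc. rewrite !comp_assoc in K. apply K; clear K.
      * rewrite HR1. lassoc. reflexivity.
      * unfold tensdl in Hr. repeat (rewrite <- tcl in Hr || rewrite <- tcr in Hr || rewrite comp_assoc in Hr).
        splitt. rwl Hr. rw (LCOT _ _ _ _).
        rw (tcr _ _ _ _ (asci C X M) (asc C X M)). rw (asci_asc V _ _ _).
        rwl (anat _ _ _ _ _ _ (idm C) x (idm M)).
        rw (pentA _ _ _ _). rwl (ainat1 _ _ _ _ m). rwl (ipent _ _ _ _). reflexivity.
      * lassoc. splitt. rewrite Hde. lassoc. reflexivity.
      * splitt. rwl Hl. rw (LCOT _ _ _ _).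
        rw (tcr _ _ _ _ (asci C X M) (asc C X M)). rw (asci_asc V _ _ _). rw (asci_asc V _ _ _).
        reflexivity.
      * pose proof (OCF C X M Δ x ρ Hl) as O. unfold Ocoact, rcoact in O. repeat (rewrite <- tcl in O || rewrite <- tcr in O || rewrite comp_assoc in O).
        splitt. rewrite <- O. reflexivity.
      * reflexivity.
    + apply COUNIT; assumption.
  - intros X X' x x' ρ ρ' f [_ [[Hl _] _]] [_ [[Hl' _] _]] [[_ Hr] Hf].
    unfold lcoact in Hl, Hl'. rewrite !comp_assoc in Hl, Hl'.
    apply MORPH; assumption.
Qed.
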